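(* Let $\epsilon>0$, $\delta\in(0,1)$, and $x\ge 4\epsilon$ with $xn\ge I_{max}$, and let $\mathcal{R}$ consist of $M=\frac{48x}{\epsilon^2}\ln\frac{2n}{\delta}$ independently generated random RR sets. Then with probability at least $1-\delta_2$, every $u\in V$ with $I_u\le(x-2\epsilon)n$ satisfies $\mathcal{F_R}(u)\le x-\epsilon$, where $\delta_2=n\left(\frac{\delta}{2n}\right)^{16}$.
   Context: $G=\langle V,E,w\rangle$ is a network with $n=|V|$ under the Linear Threshold or Independent Cascade model (live-edge form: LT — each node $v$ independently selects at most one incoming live edge, $(u,v)$ with probability $w_{uv}/W_v$ where $W_v=w_v+\sum_u w_{uv}$ includes a self-weight $w_v$; IC — each edge $(u,v)$ live independently with probability $w_{uv}$). $I_u$ is the expected number of nodes reachable from $u$ via live edges and $I_{max}=\max_u I_u$. A random RR set is the set of nodes that can reach a uniformly random node $v\in V$ via live edges in a freshly sampled live-edge graph. $\mathcal{F_R}(u)$ is the fraction of RR sets in $\mathcal{R}$ containing $u$. *)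

(* Defs.v *)
From HB Require Import structures.
From mathcomp Require Import all_boot all_order all_algebra.
From mathcomp Require Import all_classical all_reals all_analysis.
Set Implicit Arguments. Unset Strict Implicit. Unset Printing Implicit Defensive.
Import Order.TTheory GRing.Theory Num.Theory.
Local Open Scope ring_scope.

Section InfluenceDefs.
Variable R : realType.
Variable n : nat.

(* ---------- Generic live-edge model ----------
   A live-edge model is a finite sample space Omega, a probability
   weight p on it, and for every outcome a live-edge relation on V = 'I_n
   (live g u v  <=>  edge (u,v) is live in outcome g). *)

Section Generic.
Variable Omega : finType.
Variable p : Omega -> R.
Variable live : Omega -> rel 'I_n.

Definition reach_set (g : Omega) (u : 'I_n) : {set 'I_n} :=
  [set v | connect (live g) u v].

Definition influence (u : 'I_n) : R :=
  \sum_(g : Omega) p g * (#|reach_set g u|)%:R.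

Definition Imax : R := \big[Num.max/0]_(u : 'I_n) influence u.

(* A single RR-set sample: a live-edge outcome g and a target node v
   (uniform on V, independent of g).  The RR set is the set of nodes
   that can reach v via live edges in g. *)
Definition RRset (s : Omega * 'I_n) : {set 'I_n} :=
  [set u | connect (live s.1) u s.2].

Definition prob1 (s : Omega * 'I_n) : R := p s.1 / n%:R.

Definition probM (M : nat) (S : {ffun 'I_M -> Omega * 'I_n}) : R :=
  \prod_(i < M) prob1 (S i).

Definition fracRR (M : nat) (S : {ffun 'I_M -> Omega * 'I_n}) (u : 'I_n) : R :=
  (#|[set i : 'I_M | u \in RRset (S i)]|)%:R / M%:R.

Definition probEvent (M : nat) (E : pred {ffun 'I_M -> Omega * 'I_n}) : R :=
  \sum_(S | E S) probM S.

End Generic.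

(* ---------- Independent Cascade ----------
   w u v = w_{uv} (0 if (u,v) is not an edge); each edge live
   independently with probability w_{uv}. *)
Definition IC_weights (w : 'I_n -> 'I_n -> R) : Prop :=
  forall u v, 0 <= w u v <= 1.

Definition IC_space := {ffun 'I_n * 'I_n -> bool}.

Definition IC_prob (w : 'I_n -> 'I_n -> R) (g : IC_space) : R :=
  \prod_(e : 'I_n * 'I_n) (if g e then w e.1 e.2 else 1 - w e.1 e.2).

Definition IC_live (g : IC_space) : rel 'I_n := fun u v => g (u, v).

(* ---------- Linear Threshold ----------
   Each node v independently selects at most one incoming live edge:
   (u,v) with prob. w_{uv}/W_v, none with prob. w_v/W_v,
   where W_v = w_v + sum_u w_{uv} (sw v = self-weight w_v). *)
Definition LT_W (w : 'I_n -> 'I_n -> R) (sw : 'I_n -> R) (v : 'I_n) : R :=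
  sw v + \sum_(u : 'I_n) w u v.

Definition LT_weights (w : 'I_n -> 'I_n -> R) (sw : 'I_n -> R) : Prop :=
  (forall u v, 0 <= w u v) /\ (forall v, 0 <= sw v) /\ (forall v, 0 < LT_W w sw v).

Definition LT_space := {ffun 'I_n -> option 'I_n}.

Definition LT_prob (w : 'I_n -> 'I_n -> R) (sw : 'I_n -> R) (g : LT_space) : R :=
  \prod_(v : 'I_n)
     (match g v with
      | Some u => w u v / LT_W w sw v
      | None => sw v / LT_W w sw v
      end).

Definition LT_live (g : LT_space) : rel 'I_n := fun u v => g v == Some u.

End InfluenceDefs.
Arguments probEvent {R n Omega} p M E.
Arguments fracRR {R n Omega} live {M} S u.

Definition numRR (R : realType) (n : nat) (eps delta x : R) : nat :=
  `|Num.ceil (48 * x / eps ^+ 2 * ln (2 * n%:R / delta))|%N.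

Definition delta2 (R : realType) (n : nat) (delta : R) : R :=
  n%:R * (delta / (2 * n%:R)) ^+ 16.

(* Main.v *)
Require Import Defs.
From HB Require Import structures.
From mathcomp Require Import all_boot all_order all_algebra.
From mathcomp Require Import all_classical all_reals all_analysis.
From mathcomp Require Import ring lra.
Import Order.TTheory GRing.Theory Num.Theory.
Local Open Scope ring_scope.

Lemma keypoly (R : realType) (u E : R) : 0 < u -> u <= 1/12 -> 1 <= E -> E * (1 - u) <= 1 ->
  (1 - 6 * u) * (E ^+ 2 - 1) <= 2 * u - 9 * u ^+ 2.
Proof.
move=> u0 u1 E1 Eu.
have h0 : 0 <= E * (1 - u) by apply: mulr_ge0; lra.
have h2 : (E * (1 - u)) * (E * (1 - u)) <= 1 * 1 by apply: ler_pM.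
set A := (1 - u) ^+ 2.
have A0 : 0 < A by rewrite /A exprn_gt0 //; lra.
have h3 : E ^+ 2 * A <= 1 by move: h2; rewrite /A mul1r; apply: le_trans; rewrite le_eqVlt; apply/orP; left; apply/eqP; ring.
have h4 : (1 - 6 * u) * (E ^+ 2 * A) <= (1 - 6 * u) * 1 by apply: ler_wpM2l => //; lra.
have h5 : (1 - 6 * u) * (1 - A) <= (2 * u - 9 * u ^+ 2) * A.
  rewrite /A; nra.
rewrite -(ler_pM2r A0); nra.
Qed.

Lemma chern_exp (R : realType) (x eps q : R) : 0 < eps -> 4 * eps <= x -> 0 <= q -> q <= x - 2 * eps ->
  q * (expR (2 * eps / (3 * x)) - 1) - 2 * eps / (3 * x) * (x - eps) <= - (eps ^+ 2 / (3 * x)).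
Proof.
move=> e0 ex q0 qx.
have x0 : 0 < x by lra.
set u := eps / (3 * x).
have eu : eps = 3 * u * x by rewrite /u; field; lra.
have -> : 2 * eps / (3 * x) = u + u by rewrite /u; field; lra.
have -> : eps ^+ 2 / (3 * x) = 3 * u ^+ 2 * x by rewrite eu; field; lra.
rewrite expRD.
set E := expR u.
have u0 : 0 < u by rewrite /u divr_gt0 //; lra.
have u1 : u <= 1/12 by rewrite /u ler_pdivrMr; [rewrite eu; nra| lra].
have E1 : 1 <= E by have := expR_ge1Dx u; rewrite /E; lra.
have Eu : E * (1 - u) <= 1.
  have h := expR_ge1Dx (- u).
  have : E * (1 + - u) <= E * expR (- u) by apply: ler_wpM2l => //; lra.
  by rewrite /E expRxMexpNx_1.
have k := @keypoly _ u E u0 u1 E1 Eu.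
have hE : 0 <= E * E - 1 by nra.
have h1 : q * (E * E - 1) <= (x - 2 * eps) * (E * E - 1) by apply: ler_wpM2r.
rewrite eu in h1 *.
have h2 : x * ((1 - 6 * u) * (E ^+ 2 - 1)) <= x * (2 * u - 9 * u ^+ 2) by apply: ler_wpM2l => //; lra.
rewrite expr2 in h2. nra.
Qed.

Lemma final_num (R : realType) (eps x L Mr : R) : 0 < eps -> 0 < x ->
  48 * x / eps ^+ 2 * L <= Mr -> Mr * (- (eps ^+ 2 / (3 * x))) <= - (16 * L).
Proof.
move=> e0 x0 hM.
have c0 : 0 <= eps ^+ 2 / (3 * x) by apply: divr_ge0; [apply: exprn_ge0; apply: ltW| rewrite mulr_ge0 // ltW].
have h := ler_wpM2r c0 hM.
have e3 : 48 * x / eps ^+ 2 * L * (eps ^+ 2 / (3 * x)) = 16 * L.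
  by field; rewrite !gt_eqF.
rewrite mulrN lerN2 -e3 //.
Qed.

Lemma exp_final (R : realType) (y : R) : 0 < y -> expR (- (16 * ln y)) = (y ^-1) ^+ 16.
Proof.
move=> y0; rewrite -mulrN expRM_natl expRN lnK //.
Qed.

Section Gen.
Variables (R : realType) (n : nat) (Omega : finType) (p : Omega -> R) (live : Omega -> rel 'I_n).
Hypotheses (n0 : (0 < n)%N) (p0 : forall g, 0 <= p g) (p1 : \sum_g p g = 1).

Lemma nR0 : 0 < n%:R :> R. Proof. by rewrite ltr0n. Qed.

Lemma prob1_ge0 (s : Omega * 'I_n) : 0 <= prob1 p s.
Proof. by rewrite /prob1 divr_ge0 // ler0n. Qed.

Lemma sum_prob1 : \sum_(s : Omega * 'I_n) prob1 p s = 1.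
Proof.
rewrite -(pair_bigA _ (fun g v => prob1 p (g, v))) /= -p1.
apply: eq_bigr => g _; rewrite /prob1 /= sumr_const card_ord.
rewrite -[X in X = _]mulr_natr divfK //; by rewrite gt_eqF // nR0.
Qed.

Lemma sum_fun M (F : 'I_M -> Omega * 'I_n -> R) :
  \sum_(S : {ffun 'I_M -> Omega * 'I_n}) \prod_i F i (S i) = \prod_i \sum_s F i s.
Proof. by rewrite bigA_distr_bigA. Qed.

Lemma probM_ge0 M (S : {ffun 'I_M -> Omega * 'I_n}) : 0 <= probM p S.
Proof. by rewrite /probM; apply: prodr_ge0 => i _; apply: prob1_ge0. Qed.

Lemma probM_total M : \sum_(S : {ffun 'I_M -> Omega * 'I_n}) probM p S = 1.
Proof.
rewrite /probM (@sum_fun _ (fun _ s => prob1 p s)); under eq_bigr do rewrite sum_prob1.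
by rewrite prodr_const expr1n.
Qed.

Lemma probE_compl M (E : pred {ffun 'I_M -> Omega * 'I_n}) :
  probEvent p M E = 1 - probEvent p M (predC E).
Proof.
by rewrite -(probM_total M) (bigID E) /= addrK.
Qed.

Lemma union_bound M (P : 'I_n -> pred {ffun 'I_M -> Omega * 'I_n}) :
  probEvent p M (predC (fun S => [forall u, P u S])) <=
  \sum_u probEvent p M (predC (P u)).
Proof.
rewrite /probEvent big_mkcond /=.
under [X in _ <= X]eq_bigr do rewrite big_mkcond /=.
rewrite exchange_big /=; apply: ler_sum => S _.
case: forallP => /= [_|]; first by apply: sumr_ge0 => u _; case: ifP => // _; apply: probM_ge0.
move=> /existsNP [u Hu].
rewrite (bigD1 u) //= ifT; last by apply/negP.
rewrite lerDl; apply: sumr_ge0 => v _; case: ifP => // _; apply: probM_ge0.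
Qed.

Lemma card_sum (T : finType) (P : pred T) : (#|[set v | P v]|)%:R = \sum_v (P v)%:R :> R.
Proof.
rewrite cardsE -sum1_card natr_sum big_mkcond /=.
by apply: eq_bigr => v _; rewrite -topredE /=; case: (P v).
Qed.

Lemma q_eq u : \sum_(s : Omega * 'I_n) prob1 p s * (u \in RRset live s)%:R = influence p live u / n%:R.
Proof.
rewrite -(pair_bigA _ (fun g v => prob1 p (g,v) * (u \in RRset live (g,v))%:R)) /=.
rewrite /influence mulr_suml; apply: eq_bigr => g _.
rewrite /reach_set card_sum mulr_sumr mulr_suml; apply: eq_bigr => v _.
by rewrite /prob1 /RRset inE /=; rewrite mulrAC.
Qed.

Lemma infl_ge0 u : 0 <= influence p live u.
Proof. by apply: sumr_ge0 => g _; apply: mulr_ge0 => //; rewrite ler0n. Qed.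

Lemma mgf u M lam :
  \sum_(S : {ffun 'I_M -> Omega * 'I_n}) probM p S * expR (lam * (#|[set i : 'I_M | u \in RRset live (S i)]|)%:R)
  = (\sum_(s : Omega * 'I_n) prob1 p s * expR (lam * (u \in RRset live s)%:R)) ^+ M.
Proof.
under eq_bigr => S _ do rewrite card_sum mulr_sumr expR_sum /probM -big_split /=.
by rewrite (@sum_fun _ (fun _ s => prob1 p s * expR (lam * (u \in RRset live s)%:R))) prodr_const card_ord.
Qed.

Lemma mgf_base u lam :
  \sum_(s : Omega * 'I_n) prob1 p s * expR (lam * (u \in RRset live s)%:R)
  = 1 + influence p live u / n%:R * (expR lam - 1).
Proof.
rewrite -q_eq -[X in X + _]sum_prob1 mulr_suml -big_split /=; apply: eq_bigr => s _.
by case: (u \in RRset live s); rewrite /= ?mulr1 ?mulr0 ?expR0; ring.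
Qed.

Lemma markov u M lam t : 0 <= lam -> 0 < M%:R :> R ->
  probEvent p M (predC (fun S => fracRR live S u <= t)) <=
  expR (- (lam * t * M%:R)) *
  \sum_(S : {ffun 'I_M -> Omega * 'I_n}) probM p S * expR (lam * (#|[set i : 'I_M | u \in RRset live (S i)]|)%:R).
Proof.
move=> l0 M0.
rewrite /probEvent big_mkcond mulr_sumr /=; apply: ler_sum => S _.
have pS := probM_ge0 _ S.
case: ifP => H; last by apply: mulr_ge0; [apply: expR_ge0| apply: mulr_ge0 => //; apply: expR_ge0].
move: H; rewrite /fracRR -ltNge ltr_pdivlMr // => H.
rewrite mulrCA -{1}[probM p S]mulr1; apply: ler_wpM2l => //.
rewrite -expRD.
have h : 0 <= - (lam * t * M%:R) + lam * (#|[set i | u \in RRset live (S i)]|)%:R.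
  rewrite -mulrA addrC subr_ge0; apply: ler_wpM2l => //; exact: ltW.
by have := expR_ge1Dx (- (lam * t * M%:R) + lam * (#|[set i | u \in RRset live (S i)]|)%:R); lra.
Qed.


Lemma tail_u u (eps delta x : R) : 0 < eps -> 0 < delta < 1 -> 4 * eps <= x ->
  influence p live u <= (x - 2 * eps) * n%:R ->
  probEvent p (numRR n eps delta x) (predC (fun S => fracRR live S u <= x - eps))
  <= (delta / (2 * n%:R)) ^+ 16.
Proof.
move=> e0 /andP[d0 d1] ex hI.
have x0 : 0 < x by lra.
have nn := nR0.
have n1 : 1 <= n%:R :> R by rewrite ler1n.
set y := 2 * n%:R / delta.
have y1 : 1 < y by rewrite /y ltr_pdivlMr //; lra.
set L := ln y.
have L0 : 0 < L by apply: ln_gt0.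
set M := numRR n eps delta x.
set z := 48 * x / eps ^+ 2 * L.
have z0 : 0 < z by rewrite /z; apply: mulr_gt0 => //; apply: divr_gt0; [lra| exact: exprn_gt0].
have hM : z <= M%:R.
  rewrite /M /numRR natr_absz ger0_norm; first exact: ceil_ge.
  rewrite ceil_ge0; have := z0; rewrite /z /L /y; lra.
have M0 : 0 < M%:R :> R by exact: (lt_le_trans z0 hM).
set lam := 2 * eps / (3 * x).
have l0 : 0 <= lam by rewrite /lam; apply: divr_ge0; lra.
apply: (le_trans (markov u M lam (x - eps) l0 M0)).
rewrite mgf mgf_base.
set q := influence p live u / n%:R.
have q0 : 0 <= q by rewrite /q divr_ge0 // ?infl_ge0 // ltW.
have qx : q <= x - 2 * eps by rewrite /q ler_pdivrMr.
have el : 0 <= expR lam - 1 by have := expR_ge1Dx lam; lra.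
have h1 : (1 + q * (expR lam - 1)) ^+ M <= expR (q * (expR lam - 1)) ^+ M.
  apply: lerXn2r; rewrite ?nnegrE ?expR_ge0 //; first by apply: addr_ge0 => //; apply: mulr_ge0.
  exact: expR_ge1Dx.
apply: le_trans (ler_wpM2l (expR_ge0 _) h1) _.
rewrite -expRM_natl -expRD.
have hc := @chern_exp _ x eps q e0 ex q0 qx.
rewrite -/lam in hc.
have -> : - (lam * (x - eps) * M%:R) + M%:R * (q * (expR lam - 1)) = M%:R * (q * (expR lam - 1) - lam * (x - eps)) by ring.
have h3 : M%:R * (- (eps ^+ 2 / (3 * x))) <= - (16 * L) by apply: final_num.
have h2 := ler_wpM2l (ltW M0) hc.
apply: le_trans (_ : expR (- (16 * L)) <= _).
  by rewrite ler_expR; exact: le_trans h2 h3.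
rewrite exp_final; last by apply: lt_trans y1.
by rewrite /y invf_div.
Qed.




Lemma main_gen (eps delta x : R) : 0 < eps -> 0 < delta < 1 -> 4 * eps <= x ->
  1 - delta2 n delta <=
   probEvent p (numRR n eps delta x)
     (fun S => [forall u : 'I_n,
        (influence p live u <= (x - 2 * eps) * n%:R) ==>
        (fracRR live S u <= x - eps)]).
Proof.
move=> e0 d e4.
rewrite probE_compl lerD2l lerN2.
apply: le_trans (union_bound _ _) _.
have -> : delta2 n delta = \sum_(u : 'I_n) (delta / (2 * n%:R)) ^+ 16 by rewrite sumr_const card_ord /delta2 mulr_natl.
apply: ler_sum => u _.
case hI : (influence p live u <= (x - 2 * eps) * n%:R).
  apply: le_trans (tail_u u eps delta x e0 d e4 hI).
  by rewrite le_eqVlt; apply/orP; left; apply/eqP; apply: eq_bigl => S; by [].    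
rewrite /probEvent big_pred0; last by [].
apply: exprn_ge0; apply: divr_ge0; first by case/andP: d => /ltW.
by rewrite mulr_ge0 // ler0n.
Qed.

End Gen.
Lemma sum_opt (R : realType) (T : finType) (F : option T -> R) :
  \sum_(o : option T) F o = F None + \sum_(i : T) F (Some i).
Proof.
rewrite (bigD1 None) //=; congr (_ + _).
rewrite (reindex_omap Some (fun o => o)) //=.
  by apply: eq_bigl => i; rewrite eqxx.
by case. 
Qed.

Lemma IC_ok (R : realType) (n : nat) (w : 'I_n -> 'I_n -> R) : IC_weights w ->
  (forall g, 0 <= IC_prob w g) /\ \sum_g IC_prob w g = 1.
Proof.
move=> hw; split.
  move=> g; rewrite /IC_prob; apply: prodr_ge0 => e _.
  by case: (g e); have := hw e.1 e.2; case/andP => ? ?; lra.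
rewrite /IC_prob.
rewrite -(bigA_distr_bigA (fun (e : 'I_n * 'I_n) (b : bool) => if b then w e.1 e.2 else 1 - w e.1 e.2)) /=.
apply: big1 => e _; rewrite big_bool /=; ring.
Qed.

Lemma LT_ok (R : realType) (n : nat) (w : 'I_n -> 'I_n -> R) sw : LT_weights w sw ->
  (forall g, 0 <= LT_prob w sw g) /\ \sum_g LT_prob w sw g = 1.
Proof.
move=> [hw [hs hW]]; split.
  move=> g; rewrite /LT_prob; apply: prodr_ge0 => v _.
  by case: (g v) => [u|]; apply: divr_ge0 => //; apply: ltW.
rewrite /LT_prob.
rewrite -(bigA_distr_bigA (fun (v : 'I_n) (o : option 'I_n) => match o with
      | Some u => w u v / LT_W w sw v
      | None => sw v / LT_W w sw v
      end)) /=.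
apply: big1 => v _; rewrite sum_opt /= -mulr_suml -mulrDl.
by rewrite divff // gt_eqF // hW.
Qed.

Theorem lemma6p5 (R : realType) (n : nat) (w : 'I_n -> 'I_n -> R) (sw : 'I_n -> R)
    (eps delta x : R) :
  (0 < n)%N -> 0 < eps -> 0 < delta < 1 -> 4 * eps <= x ->
  (* Independent Cascade model *)
  (IC_weights w ->
   Imax (IC_prob w) (@IC_live n) <= x * n%:R ->
   1 - delta2 n delta <=
   probEvent (IC_prob w) (numRR n eps delta x)
     (fun S => [forall u : 'I_n,
        (influence (IC_prob w) (@IC_live n) u <= (x - 2 * eps) * n%:R) ==>
        (fracRR (@IC_live n) S u <= x - eps)]))
  /\
  (* Linear Threshold model *)
  (LT_weights w sw ->
   Imax (LT_prob w sw) (@LT_live n) <= x * n%:R ->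
   1 - delta2 n delta <=
   probEvent (LT_prob w sw) (numRR n eps delta x)
     (fun S => [forall u : 'I_n,
        (influence (LT_prob w sw) (@LT_live n) u <= (x - 2 * eps) * n%:R) ==>
        (fracRR (@LT_live n) S u <= x - eps)])).
Proof.
move=> n0 e0 d e4; split.
  move=> hw _; have [p0 p1] := @IC_ok R n w hw.
  exact: (@main_gen R n _ (IC_prob w) (@IC_live n) n0 p0 p1 eps delta x e0 d e4).
move=> hw _; have [p0 p1] := @LT_ok R n w sw hw.
exact: (@main_gen R n _ (LT_prob w sw) (@LT_live n) n0 p0 p1 eps delta x e0 d e4).
Qed.
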